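(* Let $L$ be a Stonean locale. Restriction along the inclusion of posets $\mathrm{COpen}(L)\to L$ is a bijection from the set of normal valuations on $L$ to the set of continuous valuations on the complete Boolean algebra $\mathrm{COpen}(L)$ of compact opens of $L$; the inverse is given by precomposition with the frame homomorphism $\neg\neg:L\to\mathrm{COpen}(L)$.
   Context: A frame is a poset with finite meets and arbitrary joins, binary meets distributing over arbitrary joins; a locale is a frame viewed in the opposite category. $\neg x=\sup\{w:w\wedge x=0\}$. $a\in L$ is a compact open if $\bigvee S\ge a$ implies $\bigvee F\ge a$ for some finite $F\subset S$. $L$ is coherent if compact opens are closed under finite meets (including $1$) and every element is a join of compact opens; regular if $y=\bigvee\{x:\neg x\vee y=1\}$ for all $y$; extremally disconnected if $\neg x\vee\neg\neg x=1$ for all $x$. A Stonean locale is a coherent, regular, extremally disconnected locale (its compact opens are exactly the elements with $a=\neg\neg a$ and form a complete Boolean algebra). A continuous valuation on a lattice is $\nu$ to $[0,\infty)$ with $\nu(0)=0$, $\nu(x)+\nu(y)=\nu(x\vee y)+\nu(x\wedge y)$, monotone, preserving suprema of directed subsets (suprema computed in the lattice in question); a normal valuation on $L$ is a continuous valuation with $\nu(\neg\neg a)=\nu(a)$ for all $a$. *)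

(* Defs.v *)
From Stdlib Require Import Reals List.
Open Scope R_scope.

Record frame := Frame {
  carrier :> Type;
  le : carrier -> carrier -> Prop;
  le_refl : forall x, le x x;
  le_trans : forall x y z, le x y -> le y z -> le x z;
  le_antisym : forall x y, le x y -> le y x -> x = y;
  top : carrier;
  top_greatest : forall x, le x top;
  meet : carrier -> carrier -> carrier;
  meet_le_l : forall x y, le (meet x y) x;
  meet_le_r : forall x y, le (meet x y) y;
  meet_glb : forall x y z, le z x -> le z y -> le z (meet x y);
  sup : (carrier -> Prop) -> carrier;
  sup_ub : forall (S : carrier -> Prop) x, S x -> le x (sup S);
  sup_least : forall (S : carrier -> Prop) z, (forall x, S x -> le x z) -> le (sup S) z;
  meet_sup_distr : forall x (S : carrier -> Prop),
      meet x (sup S) = sup (fun y => exists s, S s /\ y = meet x s)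
}.

Arguments le {L} : rename.
Arguments top {L} : rename.
Arguments meet {L} : rename.
Arguments sup {L} : rename.

Section FrameDefs.
Variable L : frame.

Definition bot : L := sup (fun _ => False).
Definition join (x y : L) : L := sup (fun z => z = x \/ z = y).

Definition fneg (x : L) : L := sup (fun w => meet w x = bot).

Definition compact_open (a : L) : Prop :=
  forall S : L -> Prop, le a (sup S) ->
    exists F : list L, (forall y, In y F -> S y) /\ le a (sup (fun y => In y F)).

Definition coherent : Prop :=
  compact_open top /\
  (forall a b, compact_open a -> compact_open b -> compact_open (meet a b)) /\
  (forall x : L, exists S : L -> Prop, (forall a, S a -> compact_open a) /\ x = sup S).

Definition regular : Prop :=
  forall y : L, y = sup (fun x => join (fneg x) y = top).

Definition extremally_disconnected : Prop :=
  forall x : L, join (fneg x) (fneg (fneg x)) = top.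

Definition stonean : Prop := coherent /\ regular /\ extremally_disconnected.

Definition is_lub_in (P S : L -> Prop) (s : L) : Prop :=
  P s /\ (forall x, S x -> le x s) /\ (forall z, P z -> (forall x, S x -> le x z) -> le s z).

Definition is_glb_in (P S : L -> Prop) (s : L) : Prop :=
  P s /\ (forall x, S x -> le s x) /\ (forall z, P z -> (forall x, S x -> le z x) -> le z s).

Definition directed_in (P S : L -> Prop) : Prop :=
  (forall x, S x -> P x) /\ (exists x, S x) /\
  (forall x y, S x -> S y -> exists z, S z /\ le x z /\ le y z).

(* A continuous valuation on the lattice P (a sub-poset of L which is a lattice
   with least element bot); nu is only relevant on P. *)
Definition continuous_valuation_on (P : L -> Prop) (nu : L -> R) : Prop :=
  P bot /\ nu bot = 0 /\
  (forall x, P x -> 0 <= nu x) /\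
  (forall x y j m, P x -> P y ->
      is_lub_in P (fun z => z = x \/ z = y) j ->
      is_glb_in P (fun z => z = x \/ z = y) m ->
      nu x + nu y = nu j + nu m) /\
  (forall x y, P x -> P y -> le x y -> nu x <= nu y) /\
  (forall S s, directed_in P S -> is_lub_in P S s ->
      is_lub (fun r => exists x, S x /\ r = nu x) (nu s)).

Definition continuous_valuation (nu : L -> R) : Prop :=
  continuous_valuation_on (fun _ => True) nu.

Definition normal_valuation (nu : L -> R) : Prop :=
  continuous_valuation nu /\ (forall a, nu (fneg (fneg a)) = nu a).

End FrameDefs.

Arguments bot {L}.
Arguments join {L}.
Arguments fneg {L}.
Arguments compact_open {L}.

(* Main.v *)
Require Import Defs.
From Stdlib Require Import Reals List.

Lemma bot_le (L : frame) (x : L) : le bot x.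
Proof. unfold bot. apply sup_least. tauto. Qed.

Lemma le_bot_eq (L : frame) (x : L) : le x bot -> x = bot.
Proof. intro H. apply le_antisym; auto using bot_le. Qed.

Lemma join_ub_l (L : frame) (x y : L) : le x (join x y).
Proof. unfold join. apply sup_ub. auto. Qed.
Lemma join_ub_r (L : frame) (x y : L) : le y (join x y).
Proof. unfold join. apply sup_ub. auto. Qed.
Lemma join_least (L : frame) (x y z : L) : le x z -> le y z -> le (join x y) z.
Proof. intros. unfold join. apply sup_least. intros w [-> | ->]; auto. Qed.

Lemma meet_mono (L : frame) (a b c d : L) : le a c -> le b d -> le (meet a b) (meet c d).
Proof. intros. apply meet_glb; [apply le_trans with a | apply le_trans with b]; auto using meet_le_l, meet_le_r. Qed.

Lemma meet_comm (L : frame) (a b : L) : meet a b = meet b a.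
Proof. apply le_antisym; apply meet_glb; auto using meet_le_l, meet_le_r. Qed.

Lemma meet_sup_le (L : frame) (x : L) (S : L -> Prop) :
  le (meet x (sup S)) (sup (fun y => exists s, S s /\ y = meet x s)).
Proof. rewrite meet_sup_distr. apply le_refl. Qed.

Lemma meet_sup_bot (L : frame) (x : L) (S : L -> Prop) :
  (forall s, S s -> meet x s = bot) -> meet x (sup S) = bot.
Proof. intro H. apply le_bot_eq. eapply le_trans. apply meet_sup_le.
  apply sup_least. intros y [s [Hs ->]]. rewrite H; auto. apply le_refl. Qed.

Lemma distr_le (L : frame) (a b c : L) :
  le (meet a (join b c)) (join (meet a b) (meet a c)).
Proof. unfold join at 1. eapply le_trans. apply meet_sup_le.
  apply sup_least. intros y [s [[-> | ->] ->]]. apply join_ub_l. apply join_ub_r. Qed.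

Lemma fneg_meet (L : frame) (x : L) : meet (fneg x) x = bot.
Proof. rewrite meet_comm. unfold fneg. apply meet_sup_bot. intros s Hs.
  rewrite meet_comm. auto. Qed.

Lemma fneg_intro (L : frame) (w x : L) : meet w x = bot -> le w (fneg x).
Proof. intro. unfold fneg. apply sup_ub. auto. Qed.

Lemma fneg_anti (L : frame) (x y : L) : le x y -> le (fneg y) (fneg x).
Proof. intro H. apply fneg_intro. apply le_bot_eq. rewrite <- (fneg_meet L y).
  apply meet_mono; auto using le_refl. Qed.

Lemma le_nn (L : frame) (x : L) : le x (fneg (fneg x)).
Proof. apply fneg_intro. rewrite meet_comm. apply fneg_meet. Qed.

Lemma nn_mono (L : frame) (x y : L) : le x y -> le (fneg (fneg x)) (fneg (fneg y)).
Proof. intro. do 2 apply fneg_anti. auto. Qed.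

Lemma nn_meet (L : frame) (x y : L) :
  le (meet (fneg (fneg x)) (fneg (fneg y))) (fneg (fneg (meet x y))).
Proof.
  apply fneg_intro. set (w := meet (meet (fneg (fneg x)) (fneg (fneg y))) (fneg (meet x y))).
  change (w = bot).
  assert (H1 : le (meet (meet w x) y) bot).
  { rewrite <- (fneg_meet L (meet x y)). apply meet_glb.
    - unfold w. eapply le_trans. apply meet_le_l. eapply le_trans. apply meet_le_l. apply meet_le_r.
    - apply meet_mono. apply meet_le_r. apply le_refl. }
  assert (H2 : le (meet w x) (fneg y)). { apply fneg_intro. apply le_bot_eq; auto. }
  assert (H3 : le (meet w x) bot).
  { rewrite <- (fneg_meet L (fneg y)). apply meet_glb. 
    - unfold w. eapply le_trans. apply meet_le_l. eapply le_trans. apply meet_le_l.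
      apply meet_le_r.
    - auto. }
  assert (H4 : le w (fneg x)). { apply fneg_intro. apply le_bot_eq; auto. }
  apply le_bot_eq. rewrite <- (fneg_meet L (fneg x)). apply meet_glb; auto.
  unfold w. eapply le_trans. apply meet_le_l. apply meet_le_l.
Qed.

Lemma top_eq (L : frame) (x : L) : le top x -> x = top.
Proof. intro. apply le_antisym; auto using top_greatest. Qed.

Lemma sup_mono (L : frame) (S T : L -> Prop) : (forall x, S x -> T x) -> le (sup S) (sup T).
Proof. intro H. apply sup_least. intros. apply sup_ub. auto. Qed.

Lemma join_mono (L : frame) (a b c d : L) : le a c -> le b d -> le (join a b) (join c d).
Proof. intros. apply join_least; [apply le_trans with c | apply le_trans with d];
  auto using join_ub_l, join_ub_r. Qed.

Lemma cover_split (L : frame) (S : L -> Prop) (c : L) (F : list L) :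
  (forall y, In y F -> S y \/ y = c) ->
  exists G, (forall y, In y G -> S y) /\
    le (sup (fun y => In y F)) (join c (sup (fun y => In y G))).
Proof.
  induction F as [|y F IH]; intro H.
  - exists nil. split. simpl; tauto. apply sup_least. simpl; tauto.
  - destruct IH as [G [HG HF]]. intros z Hz. apply H. simpl; auto.
    destruct (H y (or_introl eq_refl)) as [Hy | Hy].
    + exists (y :: G). split.
      * intros z [<- | Hz]; auto.
      * apply sup_least. intros z [<- | Hz].
        -- eapply le_trans. 2: apply join_ub_r. apply sup_ub. simpl; auto.
        -- eapply le_trans. 2: apply join_mono. 2: apply le_refl.
           2: apply (sup_mono L (fun y => In y G)). 2: simpl; auto.
           eapply le_trans. 2: apply HF. apply sup_ub. auto.
    + exists G. split. auto. apply sup_least. intros z [<- | Hz].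
      * subst. apply join_ub_l.
      * eapply le_trans. 2: apply HF. apply sup_ub. auto.
Qed.

Lemma nn_compact (L : frame) (x : L) :
  compact_open (L:=L) top -> extremally_disconnected L -> compact_open (fneg (fneg x)).
Proof.
  intros Ht Hed S HS.
  destruct (Ht (fun y => S y \/ y = fneg x)) as [F [HF1 HF2]].
  { rewrite <- (Hed x). apply join_least.
    - apply sup_ub. auto.
    - eapply le_trans. apply HS. apply sup_mono. auto. }
  destruct (cover_split L S (fneg x) F HF1) as [G [HG1 HG2]].
  exists G. split. auto.
  apply le_trans with (meet (fneg (fneg x)) top). apply meet_glb. apply le_refl. apply top_greatest.
  eapply le_trans. apply meet_mono. apply le_refl. eapply le_trans. apply HF2. apply HG2.
  eapply le_trans. apply distr_le. apply join_least.
  - rewrite fneg_meet. apply bot_le.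
  - apply meet_le_r.
Qed.

Lemma join_top_meet (L : frame) (p q a : L) :
  join p a = top -> join q a = top -> join (meet p q) a = top.
Proof.
  intros Hp Hq. apply top_eq.
  eapply le_trans. apply (meet_glb _ (join p a) (join q a)); rewrite ?Hp, ?Hq; apply le_refl.
  eapply le_trans. apply distr_le. apply join_least.
  - rewrite meet_comm. eapply le_trans. apply distr_le. apply join_least.
    + rewrite meet_comm. apply join_ub_l.
    + eapply le_trans. apply meet_le_r. apply join_ub_r.
  - eapply le_trans. apply meet_le_r. apply join_ub_r.
Qed.

Lemma fin_sep (L : frame) (a : L) (F : list L) :
  (forall x, In x F -> join (fneg x) a = top) ->
  exists y, join y a = top /\ forall x, In x F -> meet y x = bot.
Proof.
  induction F as [|x0 F IH]; intro H.
  - exists top. split. apply top_eq. apply join_ub_l. simpl; tauto.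
  - destruct IH as [y [Hy1 Hy2]]. intros; apply H; simpl; auto.
    exists (meet (fneg x0) y). split.
    + apply join_top_meet; auto. apply H. simpl; auto.
    + intros x [<- | Hx]; apply le_bot_eq.
      * rewrite <- (fneg_meet L x0). apply meet_mono. apply meet_le_l. apply le_refl.
      * rewrite <- (Hy2 x Hx). apply meet_mono. apply meet_le_r. apply le_refl.
Qed.

Lemma compact_nn (L : frame) (a : L) :
  regular L -> compact_open a -> fneg (fneg a) = a.
Proof.
  intros Hr Hc. apply le_antisym. 2: apply le_nn.
  destruct (Hc (fun x => join (fneg x) a = top)) as [F [HF1 HF2]].
  { rewrite <- (Hr a). apply le_refl. }
  destruct (fin_sep L a F HF1) as [y [Hy1 Hy2]].
  assert (Hya : meet y a = bot).
  { apply le_bot_eq. rewrite <- (meet_sup_bot L y (fun x => In x F)); auto.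
    apply meet_mono. apply le_refl. auto. }
  assert (Hyn : le y (fneg a)) by (apply fneg_intro; auto).
  assert (Htop : join (fneg a) a = top).
  { apply top_eq. rewrite <- Hy1. apply join_least. eapply le_trans. apply Hyn. apply join_ub_l.
    apply join_ub_r. }
  apply le_trans with (meet (fneg (fneg a)) top). apply meet_glb. apply le_refl. apply top_greatest.
  rewrite <- Htop. eapply le_trans. apply distr_le. apply join_least.
  - rewrite fneg_meet. apply bot_le.
  - apply meet_le_r.
Qed.
Open Scope R_scope.

Lemma is_lub_ext (E1 E2 : R -> Prop) (m : R) :
  (forall r, E1 r <-> E2 r) -> is_lub E1 m -> is_lub E2 m.
Proof.
  intros H [H1 H2]. split.
  - intros r Hr. apply H1. apply H. auto.
  - intros b Hb. apply H2. intros r Hr. apply Hb. apply H. auto.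
Qed.

Theorem mainTheorem16 (L : frame) (HL : stonean L) :
  (forall x : L, compact_open (fneg (fneg x))) /\
  (forall nu : L -> R, normal_valuation L nu ->
      continuous_valuation_on L compact_open nu) /\
  (forall mu : L -> R, continuous_valuation_on L compact_open mu ->
      normal_valuation L (fun x => mu (fneg (fneg x)))) /\
  (forall nu : L -> R, normal_valuation L nu ->
      forall x : L, nu (fneg (fneg x)) = nu x) /\
  (forall mu : L -> R, continuous_valuation_on L compact_open mu ->
      forall a : L, compact_open a -> mu (fneg (fneg a)) = mu a).
Proof.
  destruct HL as [[Ht [Hmeet Hcov]] [Hr Hed]].
  assert (NC : forall x : L, compact_open (fneg (fneg x))).
  { intro x. apply nn_compact; auto. }
  assert (CN : forall a : L, compact_open a -> fneg (fneg a) = a).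
  { intros a Ha. apply compact_nn; auto. }
  split; [exact NC|]. split; [|split; [|split]].
  -
    intros nu [[_ [Hnb [Hnn [Hmod [Hmon Hdir]]]]] Hnorm].
    split; [|split; [|split; [|split; [|split]]]].
    + intros S _. exists nil. split. simpl; tauto. apply bot_le.
    + exact Hnb.
    + intros x _. apply Hnn. exact I.
    + intros x y j m Px Py Hj Hm.
      rewrite (Hmod x y (join x y) (meet x y) I I).
      2: { split. exact I. split. intros z [-> | ->]. apply join_ub_l. apply join_ub_r.
           intros z _ H. apply join_least; apply H; auto. }
      2: { split. exact I. split. intros z [-> | ->]. apply meet_le_l. apply meet_le_r.
           intros z _ H. apply meet_glb; apply H; auto. }
      destruct Hj as [Pj [Hj1 Hj2]]. destruct Hm as [Pm [Hm1 Hm2]].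
      assert (Em : m = meet x y).
      { apply le_antisym. apply meet_glb; apply Hm1; auto.
        apply Hm2. apply Hmeet; auto. intros z [-> | ->]. apply meet_le_l. apply meet_le_r. }
      assert (Ej : nu j = nu (join x y)).
      { apply Rle_antisym.
        - rewrite <- (Hnorm (join x y)). apply Hmon; try exact I.
          apply Hj2. apply NC. intros z [-> | ->]; apply le_trans with (join x y);
          try apply le_nn. apply join_ub_l. apply join_ub_r.
        - apply Hmon; try exact I. apply join_least; apply Hj1; auto. }
      rewrite Em, Ej. reflexivity.
    + intros x y _ _ H. apply Hmon; auto.
    + intros S s [HDP [Hne Hdd]] [Ps [Hs1 Hs2]].
      assert (Hl := Hdir S (sup S)).
      assert (Es : s = fneg (fneg (sup S))).
      { apply le_antisym.
        - apply Hs2. apply NC. intros x Hx. eapply le_trans. apply sup_ub. exact Hx. apply le_nn.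
        - rewrite <- (CN s Ps). apply nn_mono. apply sup_least. auto. }
      rewrite Es, Hnorm. apply Hl.
      * split. intros; exact I. split; auto.
      * split. exact I. split. apply sup_ub. intros z _ H. apply sup_least. auto.
  -
    intros mu [Pb [Hmb [Hmn [Hmod [Hmon Hdir]]]]].
    split.
    + split; [|split; [|split; [|split; [|split]]]].
      * exact I.
      * cbv beta. rewrite CN; auto.
      * intros x _. apply Hmn. apply NC.
      * intros x y j m _ _ [_ [Hj1 Hj2]] [_ [Hm1 Hm2]]. cbv beta.
        apply Hmod; try apply NC.
        -- split. apply NC. split.
           ++ intros z [-> | ->]; apply nn_mono; apply Hj1; auto.
           ++ intros z Pz H. rewrite <- (CN z Pz). apply nn_mono. apply Hj2. exact I.
              intros w [-> | ->]; eapply le_trans; [apply le_nn | apply H; auto| apply le_nn | apply H; auto].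
        -- split. apply NC. split.
           ++ intros z [-> | ->]; apply nn_mono; apply Hm1; auto.
           ++ intros z Pz H. apply le_trans with (meet (fneg (fneg x)) (fneg (fneg y))).
              apply meet_glb; apply H; auto.
              eapply le_trans. apply nn_meet. apply nn_mono. apply Hm2. exact I.
              intros w [-> | ->]. apply meet_le_l. apply meet_le_r.
      * intros x y _ _ H. cbv beta. apply Hmon; try apply NC. apply nn_mono; auto.
      * intros S s [_ [Hne Hdd]] [_ [Hs1 Hs2]]. cbv beta.
        set (S' := fun z => exists x, S x /\ z = fneg (fneg x)).
        assert (Hl := Hdir S' (fneg (fneg s))).
        eapply is_lub_ext. 2: apply Hl.
        -- intro r. split.
           ++ intros [z [[x [Hx ->]] ->]]. exists x. auto.
           ++ intros [x [Hx ->]]. exists (fneg (fneg x)). split; auto. exists x; auto.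
        -- split. intros z [x [_ ->]]. apply NC. split.
           ++ destruct Hne as [x Hx]. exists (fneg (fneg x)). exists x; auto.
           ++ intros a b [x [Hx ->]] [y [Hy ->]].
              destruct (Hdd x y Hx Hy) as [z [Hz [Hxz Hyz]]].
              exists (fneg (fneg z)). split. exists z; auto. split; apply nn_mono; auto.
        -- split. apply NC. split.
           ++ intros z [x [Hx ->]]. apply nn_mono. apply Hs1. auto.
           ++ intros z Pz H. rewrite <- (CN z Pz). apply nn_mono. apply Hs2. exact I.
              intros x Hx. eapply le_trans. apply le_nn. apply H. exists x; auto.
    + intro a. cbv beta. rewrite (CN (fneg (fneg a))); auto.
  - intros nu [_ Hn] x. auto.
  - intros mu _ a Ha. rewrite CN; auto.
Qed.
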